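(* Let $f:\mathbb R\to\mathbb R$ be monotonically increasing with $f(0)=0$. Let $\vec X^m\in\underline V^h_{\partial_0}$ satisfy assumption $(\mathfrak A)$, let $\Delta t_m>0$, and let $(\delta\vec X^{m+1},\kappa^{m+1})\in\underline V^h_\partial\times W^h_{\partial_0}$ satisfy, with $\vec X^{m+1}=\vec X^m+\delta\vec X^{m+1}$, $$\Big(\vec X^m\cdot\vec e_1\,\tfrac{\vec X^{m+1}-\vec X^m}{\Delta t_m},\chi\,\vec\nu^m|\vec X^m_\rho|\Big)^h=\Big(\vec X^m\cdot\vec e_1\,\pi^h[f(\kappa^{m+1})],\chi|\vec X^m_\rho|\Big)^h\quad\forall\chi\in W^h_{\partial_0},$$ $$\Big(\vec X^m\cdot\vec e_1\,\kappa^{m+1}\vec\nu^m,\vec\eta\,|\vec X^m_\rho|\Big)^h+\big(\vec\eta\cdot\vec e_1,|\vec X^{m+1}_\rho|\big)+\Big((\vec X^m\cdot\vec e_1)\vec X^{m+1}_\rho,\vec\eta_\rho|\vec X^m_\rho|^{-1}\Big)=B^m(\vec\eta)\quad\forall\vec\eta\in\underline V^h_\partial.$$ Then $E(\vec X^{m+1})+2\pi\Delta t_m\big(\vec X^m\cdot\vec e_1\,f(\kappa^{m+1}),\kappa^{m+1}|\vec X^m_\rho|\big)^h\le E(\vec X^m)$, and in particular $E(\vec X^{m+1})\le E(\vec X^m)$.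
   Context: Setup. $\vec e_1=(1,0)^T$, $\vec e_2=(0,1)^T$; ''$\cdot$'' is the Euclidean inner product; $[r]_+=\max\{r,0\}$, $[r]_-=-\max\{-r,0\}$. $I$ is either the periodic interval $\mathbb R/\mathbb Z$ (with $\partial I=\emptyset$) or $I=(0,1)$ (with $\partial I=\{0,1\}$). $\partial I=\partial_DI\cup\partial_0I\cup\partial_1I\cup\partial_2I$ is a given disjoint partition, and $\widehat\varrho^{(p)}\in\mathbb R$, $p\in\{0,1\}$, are given constants with $|\widehat\varrho^{(p)}|\le1$. Let $J\ge3$, $h=1/J$, $q_j=jh$ ($j=0,\dots,J$; $q_0=q_J$ identified in the periodic case). $V^h$ is the space of continuous functions on $\overline I$ (periodic if $I=\mathbb R/\mathbb Z$) that are affine on each $[q_{j-1},q_j]$, and $\pi^h$ is the nodal interpolation onto $V^h$; $\underline V^h=[V^h]^2$; $\underline V^h_{\partial_0}=\{\vec\eta\in\underline V^h:\vec\eta(\rho)\cdot\vec e_1=0\ \forall\rho\in\partial_0I\}$; $\underline V^h_\partial=\{\vec\eta\in\underline V^h_{\partial_0}:\vec\eta(\rho)\cdot\vec e_i=0\ \forall\rho\in\partial_iI,\ i=1,2;\ \vec\eta(\rho)=\vec0\ \forall\rho\in\partial_DI\}$; $W^h_{\partial_0}=\{\chi\in V^h:\chi(\rho)=0\ \forall\rho\in\partial_0I\}$. $(\cdot,\cdot)$ is the $L^2(I)$ inner product, and for piecewise continuous $f,g$ the mass-lumped product is $(f,g)^h=\tfrac h2\sum_{j=1}^J[(fg)(q_j^-)+(fg)(q_{j-1}^+)]$.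 $\vec\nu^m=-[\vec X^m_\rho]^\perp/|\vec X^m_\rho|$ with $(a,b)^\perp=(b,-a)$. Assumption $(\mathfrak A)$: $|\vec X^m_\rho|>0$ a.e. on $I$ and $\vec X^m(\rho)\cdot\vec e_1>0$ for all $\rho\in\overline I\setminus\partial_0I$. $B^m(\vec\eta)=-\sum_{p\in\partial_1I}\widehat\varrho^{(p)}(\vec X^m(p)\cdot\vec e_1)\vec\eta(p)\cdot\vec e_2-\sum_{p\in\partial_2I}\big(([\widehat\varrho^{(p)}]_+\vec X^{m+1}(p)+[\widehat\varrho^{(p)}]_-\vec X^m(p))\cdot\vec e_1\big)\vec\eta(p)\cdot\vec e_1$. The discrete energy of $\vec X\in\underline V^h$ is $E(\vec X)=2\pi(\vec X\cdot\vec e_1,|\vec X_\rho|)+2\pi\sum_{p\in\partial_1I}\widehat\varrho^{(p)}(\vec X(p)\cdot\vec e_1)(\vec X(p)\cdot\vec e_2)+\pi\sum_{p\in\partial_2I}\widehat\varrho^{(p)}(\vec X(p)\cdot\vec e_1)^2$. *)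

(* Defs.v *)
From Stdlib Require Import Reals Lra Lia.
Open Scope R_scope.

(* Boundary types of the endpoints of I = (0,1): partition
   dI = d_D I u d_0 I u d_1 I u d_2 I.  Endpoints are indexed by bool:
   false = rho 0, true = rho 1. *)
Inductive BType := BDir | BZero | BOne | BTwo.
Scheme Equality for BType.

(* nodal representation: a function in V^h is given by its nodal values
   u j = u(q_j), j = 0..J (values beyond J are irrelevant). *)
Definition SF := nat -> R.
Definition VF := nat -> (R * R)%type.

Definition hh (J : nat) : R := / INR J.
Definition node (J : nat) (p : bool) : nat := if p then J else 0%nat.
Definition ppos (p : bool) : R := if p then 1 else 0.

Fixpoint sumR (n : nat) (g : nat -> R) : R :=
  match n with O => 0 | S k => sumR k g + g (S k) end.

Definition dot (u v : R * R) : R := fst u * fst v + snd u * snd v.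
Definition nrm (u : R * R) : R := sqrt (fst u ^ 2 + snd u ^ 2).
Definition vadd (u v : R * R) : R * R := (fst u + fst v, snd u + snd v).
Definition vsub (u v : R * R) : R * R := (fst u - fst v, snd u - snd v).
Definition vscal (c : R) (u : R * R) : R * R := (c * fst u, c * snd u).

Definition Xe1 (X : VF) : SF := fun k => fst (X k).

(* (X_rho) on element j = [q_{j-1}, q_j], j = 1..J (piecewise constant). *)
Definition drho (J : nat) (X : VF) (j : nat) : R * R :=
  ((fst (X j) - fst (X (j - 1)%nat)) / hh J,
   (snd (X j) - snd (X (j - 1)%nat)) / hh J).

(* nu = - [X_rho]^perp / |X_rho|, with (a,b)^perp = (b,-a), on element j *)
Definition nu (J : nat) (X : VF) (j : nat) : R * R :=
  let a := fst (drho J X j) in let b := snd (drho J X j) in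
  (- b / nrm (drho J X j), a / nrm (drho J X j)).

(* mass-lumped product (f,g)^h = h/2 sum_j [(fg)(q_j^-) + (fg)(q_{j-1}^+)],
   where F j k is the value of the (piecewise continuous) product fg
   on element j evaluated at node k (k = j or k = j-1). *)
Definition lumped (J : nat) (F : nat -> nat -> R) : R :=
  hh J / 2 * sumR J (fun j => F j j + F j (j - 1)%nat).

(* exact L^2(I) product (u, c) of a piecewise linear u (nodal values) and a
   piecewise constant c (c j = value on element j):
   int_{q_{j-1}}^{q_j} u c = h * (u(q_{j-1}) + u(q_j))/2 * c j. *)
Definition l2_pl_pc (J : nat) (u : SF) (c : nat -> R) : R :=
  sumR J (fun j => hh J * ((u (j - 1)%nat + u j) / 2) * c j).

(* evaluation of the continuous piecewise linear function with nodal values u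
   at rho in [0,1], via hat functions *)
Definition hat (J j : nat) (rho : R) : R :=
  Rmax 0 (1 - Rabs (rho - INR j * hh J) / hh J).
Definition evalS (J : nat) (u : SF) (rho : R) : R :=
  u 0%nat * hat J 0 rho + sumR J (fun j => u j * hat J j rho).

Definition in_bdry (per : bool) (bc : bool -> BType) (t : BType) (p : bool) : Prop :=
  per = false /\ bc p = t.
Definition bsum (per : bool) (bc : bool -> BType) (t : BType) (g : bool -> R) : R :=
  if per then 0 else
    (if BType_beq (bc false) t then g false else 0) +
    (if BType_beq (bc true) t then g true else 0).

(* V^h: periodicity identification q_0 = q_J in the periodic case *)
Definition inVhS (per : bool) (J : nat) (u : SF) : Prop := per = true -> u J = u 0%nat.
Definition inVh (per : bool) (J : nat) (X : VF) : Prop := per = true -> X J = X 0%nat.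

Definition Vh_d0 (per : bool) (bc : bool -> BType) (J : nat) (X : VF) : Prop :=
  inVh per J X /\ forall p, in_bdry per bc BZero p -> fst (X (node J p)) = 0.

Definition Vh_d (per : bool) (bc : bool -> BType) (J : nat) (X : VF) : Prop :=
  Vh_d0 per bc J X /\
  (forall p, in_bdry per bc BOne p -> fst (X (node J p)) = 0) /\
  (forall p, in_bdry per bc BTwo p -> snd (X (node J p)) = 0) /\
  (forall p, in_bdry per bc BDir p -> X (node J p) = (0, 0)).

Definition Wh_d0 (per : bool) (bc : bool -> BType) (J : nat) (u : SF) : Prop :=
  inVhS per J u /\ forall p, in_bdry per bc BZero p -> u (node J p) = 0.

(* Assumption (A): |X_rho| > 0 a.e. (i.e. on every element, X_rho being
   piecewise constant), and X . e1 > 0 on closure(I) \ d_0 I. *)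
Definition assumptionA (per : bool) (bc : bool -> BType) (J : nat) (X : VF) : Prop :=
  (forall j, (1 <= j <= J)%nat -> nrm (drho J X j) > 0) /\
  (forall rho, 0 <= rho <= 1 ->
     ~ (exists p, in_bdry per bc BZero p /\ rho = ppos p) ->
     evalS J (Xe1 X) rho > 0).

Definition rplus (r : R) : R := Rmax r 0.
Definition rminus (r : R) : R := - Rmax (- r) 0.

Definition Bm (per : bool) (bc : bool -> BType) (rh : bool -> R) (J : nat)
  (Xm Xm1 eta : VF) : R :=
  - bsum per bc BOne (fun p => rh p * fst (Xm (node J p)) * snd (eta (node J p)))
  - bsum per bc BTwo (fun p =>
      (rplus (rh p) * fst (Xm1 (node J p)) + rminus (rh p) * fst (Xm (node J p)))
      * fst (eta (node J p))).

Definition Energy (per : bool) (bc : bool -> BType) (rh : bool -> R) (J : nat)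
  (X : VF) : R :=
  2 * PI * l2_pl_pc J (Xe1 X) (fun j => nrm (drho J X j))
  + 2 * PI * bsum per bc BOne (fun p => rh p * fst (X (node J p)) * snd (X (node J p)))
  + PI * bsum per bc BTwo (fun p => rh p * fst (X (node J p)) ^ 2).

(* Main.v *)
Require Import Defs.
From Stdlib Require Import Reals Lra Lia Classical.
Open Scope R_scope.

Lemma sumR_ext n f g : (forall j, (1 <= j <= n)%nat -> f j = g j) -> sumR n f = sumR n g.
Proof. induction n; simpl; intros H; [reflexivity|].
rewrite IHn by (intros; apply H; lia). rewrite H by lia. reflexivity. Qed.

Lemma sumR_plus n f g : sumR n f + sumR n g = sumR n (fun j => f j + g j).
Proof. induction n; simpl; [lra|]. rewrite <- IHn. lra. Qed.

Lemma sumR_minus n f g : sumR n f - sumR n g = sumR n (fun j => f j - g j).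
Proof. induction n; simpl; [lra|]. rewrite <- IHn. lra. Qed.

Lemma sumR_scal n c f : sumR n (fun j => c * f j) = c * sumR n f.
Proof. induction n; simpl; [lra|]. rewrite IHn. lra. Qed.

Lemma sumR_le n f g : (forall j, (1 <= j <= n)%nat -> f j <= g j) -> sumR n f <= sumR n g.
Proof. induction n; simpl; intros H; [lra|].
assert (sumR n f <= sumR n g) by (apply IHn; intros; apply H; lia).
assert (f (S n) <= g (S n)) by (apply H; lia). lra. Qed.

Lemma sumR_zero n : sumR n (fun _ => 0) = 0.
Proof. induction n; simpl; [lra|]. rewrite IHn; lra. Qed.

Definition dlt (j k : nat) : R := if Nat.eqb j k then 1 else 0.

Lemma sumR_delta0 u n k : (n < k)%nat \/ k = 0%nat -> sumR n (fun j => u j * dlt j k) = 0.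
Proof. induction n; simpl; intros H; [reflexivity|].
rewrite IHn by lia. unfold dlt. destruct (Nat.eqb_spec (S n) k); [lia|]. ring. Qed.

Lemma sumR_delta u n k : (1 <= k <= n)%nat -> sumR n (fun j => u j * dlt j k) = u k.
Proof. induction n; simpl; intros H; [lia|].
unfold dlt at 2. destruct (Nat.eqb_spec (S n) k).
- subst. rewrite sumR_delta0 by lia. ring.
- rewrite IHn by lia. ring. Qed.

Lemma hat_node J j k : (0 < J)%nat -> hat J j (INR k * hh J) = dlt j k.
Proof. intros HJ. unfold hat, dlt.
assert (Hh : 0 < hh J) by (unfold hh; apply Rinv_0_lt_compat, lt_0_INR; lia).
replace (Rabs (INR k * hh J - INR j * hh J) / hh J) with (Rabs (INR k - INR j)).
2:{ replace (INR k * hh J - INR j * hh J) with ((INR k - INR j) * hh J) by ring.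
    rewrite Rabs_mult, (Rabs_right (hh J)) by lra. field. lra. }
destruct (Nat.eqb_spec j k).
- subst. replace (INR k - INR k) with 0 by ring. rewrite Rabs_R0. rewrite Rmax_right; lra.
- apply Rmax_left.
  assert (INR k + 1 <= INR j \/ INR j + 1 <= INR k).
  { destruct (Nat.lt_total j k) as [Hl|[Hl|Hl]]; [right|lia|left];
    rewrite <- S_INR; apply le_INR; lia. }
  unfold Rabs; destruct (Rcase_abs _); lra. Qed.

Lemma evalS_node J u k : (0 < J)%nat -> (k <= J)%nat -> evalS J u (INR k * hh J) = u k.
Proof. intros HJ Hk. unfold evalS. rewrite hat_node by lia.
rewrite (sumR_ext _ _ (fun j => u j * dlt j k)) by (intros; rewrite hat_node by lia; reflexivity).
destruct k.
- rewrite sumR_delta0 by lia. unfold dlt; simpl. ring.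
- rewrite sumR_delta by lia. unfold dlt; simpl. ring. Qed.

Lemma Xnonneg per bc J X : (0 < J)%nat -> Vh_d0 per bc J X -> assumptionA per bc J X ->
  forall k, (k <= J)%nat -> 0 <= fst (X k).
Proof. intros HJ [_ H0] [_ HA] k Hk.
assert (HJ' : 0 < INR J) by (apply lt_0_INR; lia).
destruct (classic (exists p, in_bdry per bc BZero p /\ INR k * hh J = ppos p)) as [[p [Hp Hr]]|Hn].
- assert (k = node J p).
  { unfold hh in Hr. destruct p; simpl in *.
    + apply INR_eq. apply (Rmult_eq_reg_r (/ INR J)). rewrite Hr, Rinv_r; lra.
      apply Rinv_neq_0_compat; lra.
    + assert (INR k = 0). { apply (Rmult_eq_reg_r (/ INR J)). rewrite Hr; ring.
      apply Rinv_neq_0_compat; lra. }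
      change 0 with (INR 0) in H. apply INR_eq in H; exact H. }
  subst. rewrite H0 by assumption. lra.
- assert (0 <= INR k * hh J <= 1).
  { unfold hh. split.
    + apply Rmult_le_pos; [apply pos_INR| left; apply Rinv_0_lt_compat; lra].
    + apply Rle_trans with (INR J * / INR J).
      * apply Rmult_le_compat_r; [left; apply Rinv_0_lt_compat; lra| apply le_INR; lia].
      * rewrite Rinv_r; lra. }
  specialize (HA _ H Hn). rewrite evalS_node in HA by assumption. unfold Xe1 in HA. lra. Qed.

Lemma pointwise (a b : R * R) : nrm b > 0 ->
  nrm a - nrm b - dot a (vsub a b) / nrm b <= 0.
Proof. intros Hb. destruct a as [a1 a2], b as [b1 b2]. unfold nrm, dot, vsub in *; cbn [fst snd] in *.
set (na := sqrt (a1^2 + a2^2)) in *. set (nb := sqrt (b1^2+b2^2)) in *.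
assert (Ha2 : na * na = a1^2+a2^2) by (apply sqrt_sqrt; nra).
assert (Hb2 : nb * nb = b1^2+b2^2) by (apply sqrt_sqrt; nra).
assert (Hna : 0 <= na) by apply sqrt_pos. assert (Hbp : nb > 0) by exact Hb. clear Hb.
assert (CS : a1*b1 + a2*b2 <= na * nb).
{ assert (E : (na*nb)^2 = (a1^2+a2^2)*(b1^2+b2^2)) by (rewrite <- Ha2, <- Hb2; ring).
  assert ((a1*b1+a2*b2)^2 <= (na*nb)^2).
  { rewrite E. assert (0 <= (a1*b2 - a2*b1)^2) by apply pow2_ge_0.
    assert (E2 : (a1^2+a2^2)*(b1^2+b2^2) = (a1*b1+a2*b2)^2 + (a1*b2 - a2*b1)^2) by ring.
    lra. }
  assert (0 <= na*nb) by (apply Rmult_le_pos; lra).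
  destruct (Rle_dec (a1*b1+a2*b2) (na*nb)) as [|Hn]; [assumption|].
  exfalso. apply Rnot_le_lt in Hn.
  assert ((na*nb)*(na*nb) < (a1*b1+a2*b2)*(a1*b1+a2*b2)) by (apply Rmult_le_0_lt_compat; lra).
  simpl in *. lra. }
apply (Rmult_le_reg_r nb); [lra|].
replace ((na - nb - (a1 * (a1 - b1) + a2 * (a2 - b2)) / nb) * nb)
  with (na*nb - nb*nb - (a1 * (a1 - b1) + a2 * (a2 - b2))) by (field; lra).
assert (0 <= na*na - 2*(na*nb) + nb*nb) by (replace (na*na - 2*(na*nb) + nb*nb) with ((na-nb)^2) by ring; apply pow2_ge_0).
lra. Qed.

Lemma bt (r x d : R) : r*(x+d)^2 - 2*((rplus r*(x+d) + rminus r*x)*d) <= r*x^2.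
Proof.
assert (Hp : 0 <= rplus r) by (unfold rplus, Rmax; destruct (Rle_dec r 0); lra).
assert (Hm : rminus r <= 0) by (unfold rminus, Rmax; destruct (Rle_dec (-r) 0); lra).
assert (Hs : r = rplus r + rminus r) by (unfold rplus, rminus, Rmax; destruct (Rle_dec r 0); destruct (Rle_dec (-r) 0); lra).
set (p := rplus r) in *. set (m := rminus r) in *.
assert (E : r*(x+d)^2 - 2*((p*(x+d) + m*x)*d) - r*x^2 = - (p * d^2) + m * d^2) by (rewrite Hs; ring).
assert (0 <= p * d^2) by (apply Rmult_le_pos; [lra| apply pow2_ge_0]).
assert (m * d^2 <= 0) by (assert (0 <= d^2) by apply pow2_ge_0; nra).
lra. Qed.

Lemma lumped_ext J F G : (forall j k, F j k = G j k) -> lumped J F = lumped J G.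
Proof. intros H. unfold lumped. f_equal. apply sumR_ext. intros. rewrite !H. reflexivity. Qed.

Lemma lumped_scal J c F : lumped J (fun j k => c * F j k) = c * lumped J F.
Proof. unfold lumped.
rewrite (sumR_ext _ _ (fun j => c * (F j j + F j (j-1)%nat))) by (intros; ring).
rewrite sumR_scal. ring. Qed.

Lemma beq_true a b : BType_beq a b = true -> a = b.
Proof. destruct a, b; simpl; congruence. Qed.

Lemma bsum_combine per bc t g1 g2 g3 :
  (forall p, per = false -> bc p = t -> g1 p - g2 p = g3 p) ->
  bsum per bc t g1 - bsum per bc t g2 = bsum per bc t g3.
Proof. intros H. unfold bsum. destruct per; [ring|].
destruct (BType_beq (bc false) t) eqn:E1; destruct (BType_beq (bc true) t) eqn:E2;
repeat match goal with E : BType_beq _ _ = true |- _ => apply beq_true in E end;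
try (pose proof (H false eq_refl E1)); try (pose proof (H true eq_refl E2)); lra. Qed.

Lemma bsum_le per bc t g1 g2 g3 :
  (forall p, per = false -> bc p = t -> g1 p - 2 * g2 p <= g3 p) ->
  bsum per bc t g1 - 2 * bsum per bc t g2 <= bsum per bc t g3.
Proof. intros H. unfold bsum. destruct per; [lra|].
destruct (BType_beq (bc false) t) eqn:E1; destruct (BType_beq (bc true) t) eqn:E2;
repeat match goal with E : BType_beq _ _ = true |- _ => apply beq_true in E end;
try (pose proof (H false eq_refl E1)); try (pose proof (H true eq_refl E2)); lra. Qed.

Theorem mainTheorem10
  (per : bool) (bc : bool -> BType) (rh : bool -> R) (J : nat)
  (f : R -> R) (Xm dX : VF) (kappa : SF) (dt : R) :
  (3 <= J)%nat ->
  (forall p, Rabs (rh p) <= 1) ->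
  (forall x y, x <= y -> f x <= f y) -> f 0 = 0 ->
  Vh_d0 per bc J Xm -> assumptionA per bc J Xm ->
  0 < dt ->
  Vh_d per bc J dX -> Wh_d0 per bc J kappa ->
  let Xm1 : VF := fun k => vadd (Xm k) (dX k) in
  (forall chi, Wh_d0 per bc J chi ->
     lumped J (fun j k =>
       fst (Xm k) * dot (vscal (/ dt) (vsub (Xm1 k) (Xm k))) (vscal (chi k) (nu J Xm j))
       * nrm (drho J Xm j))
     = lumped J (fun j k =>
       fst (Xm k) * f (kappa k) * chi k * nrm (drho J Xm j))) ->
  (forall eta, Vh_d per bc J eta ->
     lumped J (fun j k =>
       fst (Xm k) * kappa k * dot (nu J Xm j) (eta k) * nrm (drho J Xm j))
     + l2_pl_pc J (Xe1 eta) (fun j => nrm (drho J Xm1 j))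
     + l2_pl_pc J (Xe1 Xm) (fun j => dot (drho J Xm1 j) (drho J eta j) / nrm (drho J Xm j))
     = Bm per bc rh J Xm Xm1 eta) ->
  Energy per bc rh J Xm1
    + 2 * PI * dt * lumped J (fun j k =>
        fst (Xm k) * f (kappa k) * kappa k * nrm (drho J Xm j))
    <= Energy per bc rh J Xm
  /\ Energy per bc rh J Xm1 <= Energy per bc rh J Xm.
Proof.
intros HJ3 _ Hf Hf0 HXm HA Hdt HdX Hk Xm1 Heq1 Heq2.
assert (HJ : (0 < J)%nat) by lia.
assert (Hh : 0 < hh J) by (unfold hh; apply Rinv_0_lt_compat, lt_0_INR; lia).
assert (Hnn := Xnonneg per bc J Xm HJ HXm HA).
set (L := lumped J (fun j k => fst (Xm k) * f (kappa k) * kappa k * nrm (drho J Xm j))).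
assert (HL : 0 <= L).
{ unfold L, lumped. apply Rmult_le_pos; [lra|].
  rewrite <- (sumR_zero J). apply sumR_le. intros j Hj.
  assert (forall k, (k <= J)%nat -> 0 <= fst (Xm k) * f (kappa k) * kappa k * nrm (drho J Xm j)).
  { intros k Hk'. apply Rmult_le_pos; [|apply sqrt_pos].
    rewrite Rmult_assoc. apply Rmult_le_pos; [apply Hnn; lia|].
    destruct (Rle_dec 0 (kappa k)).
    - assert (f 0 <= f (kappa k)) by (apply Hf; lra). nra.
    - assert (f (kappa k) <= f 0) by (apply Hf; lra). nra. }
  assert (0 <= fst (Xm j) * f (kappa j) * kappa j * nrm (drho J Xm j)) by (apply H; lia).
  assert (0 <= fst (Xm (j-1)%nat) * f (kappa (j-1)%nat) * kappa (j-1)%nat * nrm (drho J Xm j)) by (apply H; lia).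
  lra. }
set (Lam := lumped J (fun j k =>
       fst (Xm k) * kappa k * dot (nu J Xm j) (dX k) * nrm (drho J Xm j))).
assert (Hrel : Lam = dt * L).
{ specialize (Heq1 kappa Hk). fold L in Heq1.
  rewrite (lumped_ext _ _ (fun j k => / dt * (fst (Xm k) * kappa k * dot (nu J Xm j) (dX k) * nrm (drho J Xm j)))) in Heq1.
  2:{ intros j k. unfold Xm1, vadd, vsub, vscal, dot. cbn [fst snd]. ring. }
  rewrite lumped_scal in Heq1. fold Lam in Heq1. rewrite <- Heq1. field. lra. }
specialize (Heq2 dX HdX). fold Lam in Heq2.
set (A1 := l2_pl_pc J (Xe1 dX) (fun j => nrm (drho J Xm1 j))) in *.
set (A2 := l2_pl_pc J (Xe1 Xm) (fun j => dot (drho J Xm1 j) (drho J dX j) / nrm (drho J Xm j))) in *.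
set (T1 := l2_pl_pc J (Xe1 Xm1) (fun j => nrm (drho J Xm1 j))).
set (T0 := l2_pl_pc J (Xe1 Xm) (fun j => nrm (drho J Xm j))).
assert (Hl2 : T1 - A1 - A2 - T0 <= 0).
{ assert (E1 : T1 = l2_pl_pc J (Xe1 Xm) (fun j => nrm (drho J Xm1 j)) + A1).
  { unfold T1, A1, l2_pl_pc. rewrite sumR_plus. apply sumR_ext. intros j _.
    unfold Xe1, Xm1, vadd. cbn [fst snd]. set (nn := nrm _). unfold Rdiv. ring. }
  rewrite E1. unfold A2, T0, l2_pl_pc.
  rewrite <- (sumR_zero J).
  match goal with |- ?a + ?b - ?b - ?c - ?d <= ?z => 
    replace (a + b - b - c - d) with ((a - c) - d) by ring end.
  rewrite !sumR_minus. apply sumR_le. intros j Hj.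
  assert (Hd : drho J dX j = vsub (drho J Xm1 j) (drho J Xm j)).
  { unfold drho, vsub, Xm1, vadd. cbn [fst snd]. f_equal; unfold Rdiv; ring. }
  rewrite Hd.
  assert (Hpos : nrm (drho J Xm j) > 0) by (apply (proj1 HA); lia).
  assert (Hp := pointwise (drho J Xm1 j) (drho J Xm j) Hpos).
  assert (0 <= hh J * ((Xe1 Xm (j - 1)%nat + Xe1 Xm j) / 2)).
  { unfold Xe1. assert (0 <= fst (Xm (j-1)%nat)) by (apply Hnn; lia).
    assert (0 <= fst (Xm j)) by (apply Hnn; lia). apply Rmult_le_pos; lra. }
  set (c := hh J * ((Xe1 Xm (j - 1)%nat + Xe1 Xm j) / 2)) in *.
  assert (c * (nrm (drho J Xm1 j) - nrm (drho J Xm j) -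
     dot (drho J Xm1 j) (vsub (drho J Xm1 j) (drho J Xm j)) / nrm (drho J Xm j)) <= 0).
  { rewrite <- (Rmult_0_r c). apply Rmult_le_compat_l; lra. }
  lra. }
assert (Hb1 : bsum per bc BOne (fun p => rh p * fst (Xm1 (node J p)) * snd (Xm1 (node J p)))
   - bsum per bc BOne (fun p => rh p * fst (Xm (node J p)) * snd (dX (node J p)))
   = bsum per bc BOne (fun p => rh p * fst (Xm (node J p)) * snd (Xm (node J p)))).
{ apply bsum_combine. intros p Hp Hb.
  assert (H0 : fst (dX (node J p)) = 0) by (apply (proj1 (proj2 HdX)); split; assumption).
  unfold Xm1, vadd. cbn [fst snd]. rewrite H0. ring. }
assert (Hb2 : bsum per bc BTwo (fun p => rh p * fst (Xm1 (node J p)) ^ 2)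
   - 2 * bsum per bc BTwo (fun p => (rplus (rh p) * fst (Xm1 (node J p)) + rminus (rh p) * fst (Xm (node J p))) * fst (dX (node J p)))
   <= bsum per bc BTwo (fun p => rh p * fst (Xm (node J p)) ^ 2)).
{ apply bsum_le. intros p _ _. unfold Xm1, vadd. cbn [fst snd]. apply bt. }
assert (HPI := PI_RGT_0).
assert (Hmain : Energy per bc rh J Xm1 + 2 * PI * Lam <= Energy per bc rh J Xm).
{ replace Lam with (Bm per bc rh J Xm Xm1 dX - A1 - A2) by lra.
  unfold Energy, Bm. fold T0. fold T1.
  set (u1 := bsum per bc BOne (fun p => rh p * fst (Xm1 (node J p)) * snd (Xm1 (node J p)))) in *.
  set (u2 := bsum per bc BOne (fun p => rh p * fst (Xm (node J p)) * snd (dX (node J p)))) in *.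
  set (u3 := bsum per bc BOne (fun p => rh p * fst (Xm (node J p)) * snd (Xm (node J p)))) in *.
  set (v1 := bsum per bc BTwo (fun p => rh p * fst (Xm1 (node J p)) ^ 2)) in *.
  set (v2 := bsum per bc BTwo (fun p => (rplus (rh p) * fst (Xm1 (node J p)) + rminus (rh p) * fst (Xm (node J p))) * fst (dX (node J p)))) in *.
  set (v3 := bsum per bc BTwo (fun p => rh p * fst (Xm (node J p)) ^ 2)) in *.
  assert (0 <= 2*PI*(-(T1 - A1 - A2 - T0))) by (apply Rmult_le_pos; lra).
  assert (0 <= PI*(v3 - (v1 - 2*v2))) by (apply Rmult_le_pos; lra).
  assert (E : 2*PI*u1 - 2*PI*u2 = 2*PI*u3) by (rewrite <- Hb1; ring).
  lra. }
assert (0 <= 2 * PI * dt * L) by (apply Rmult_le_pos; [apply Rmult_le_pos|]; lra).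
split.
- replace (2 * PI * dt * L) with (2 * PI * Lam) by (rewrite Hrel; ring). exact Hmain.
- assert (2 * PI * Lam = 2 * PI * dt * L) by (rewrite Hrel; ring). lra.
Qed.
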